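(* There is a function $g$ with $g(n)/n^2\to 0$ as $n\to\infty$ such that for every odd $n\ge 7$, the diameter of the pair digraph of the automaton $\mathcal{F}_n$ is at least $\frac{n^2}{4}+g(n)$.
   Context: For a DFA with permutation letters on state set $Q$, the pair digraph has as vertices the unordered pairs $\{p,q\}$ of distinct states and an edge from $\{p,q\}$ to $\{p\cdot c,q\cdot c\}$ for each letter $c$; its diameter is the maximum over ordered pairs of vertices of the length of a shortest directed path between them. For odd $n\ge7$, the automaton $\mathcal{F}_n$ has states $q_1,\dots,q_n$ and two letters $a,b$, both permutations, defined as follows (every state not mentioned for a letter is fixed by it): $a$ acts as the 4-cycle $q_1\to q_2\to q_3\to q_4\to q_1$; $b$ swaps $q_1$ and $q_6$; for each $1\le i\le\frac{n-3}{2}$, the states $q_{2i+1}$ and $q_{2i+3}$ are swapped by $b$ if $i$ is odd and by $a$ if $i$ is even; for each $3\le j\le\frac{n-3}{2}$, the states $q_{2j}$ and $q_{2j+2}$ are swapped by $a$ if $j$ is odd and by $b$ if $j$ is even. (Thus $a$: $q_1\to q_2\to q_3\to q_4\to q_1$, $q_5\leftrightarrow q_7$, $q_6\leftrightarrow q_8$, \dots; $b$: $q_1\leftrightarrow q_6$, $q_3\leftrightarrow q_5$, $q_7\leftrightarrow q_9$, $q_8\leftrightarrow q_{10}$, \dots, fixing $q_2,q_4$.) *)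

(* Defs.v *)
From Stdlib Require Import Reals Arith List Bool.
Import ListNotations.

(* States of F_n are q_1, ..., q_n, represented by the naturals 1..n.
   Letters: [true] = a, [false] = b. *)

(* i ranges over 1 <= i <= (n-3)/2 ;  j ranges over 3 <= j <= (n-3)/2 *)
Definition i_range (n : nat) : list nat := List.seq 1 ((n - 3) / 2).
Definition j_range (n : nat) : list nat := List.seq 3 ((n - 3) / 2 - 2).

Definition chain_swap (n : nat) (seli selj : nat -> bool) (q : nat) : nat :=
  if existsb (fun i => andb (seli i) (Nat.eqb q (2 * i + 1))) (i_range n) then q + 2
  else if existsb (fun i => andb (seli i) (Nat.eqb q (2 * i + 3))) (i_range n) then q - 2
  else if existsb (fun j => andb (selj j) (Nat.eqb q (2 * j))) (j_range n) then q + 2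
  else if existsb (fun j => andb (selj j) (Nat.eqb q (2 * j + 2))) (j_range n) then q - 2
  else q.

Definition a_act (n q : nat) : nat :=
  if Nat.eqb q 1 then 2
  else if Nat.eqb q 2 then 3
  else if Nat.eqb q 3 then 4
  else if Nat.eqb q 4 then 1
  else chain_swap n Nat.even Nat.odd q.

Definition b_act (n q : nat) : nat :=
  if Nat.eqb q 1 then 6
  else if Nat.eqb q 6 then 1
  else chain_swap n Nat.odd Nat.even q.

Definition letter_act (n : nat) (c : bool) (q : nat) : nat :=
  if c then a_act n q else b_act n q.

Definition word_act (n : nat) (w : list bool) (q : nat) : nat :=
  fold_left (fun x c => letter_act n c x) w q.

(* Vertices of the pair digraph of F_n: unordered pairs {p,q} of distinct states,
   represented by (p,q) with 1 <= p < q <= n. *)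
Definition pair_vertex (n : nat) (v : nat * nat) : Prop :=
  1 <= fst v /\ fst v < snd v /\ snd v <= n.

(* A walk of length k in the pair digraph from {p,q} is determined by a word w of
   length k (one edge per letter); it ends at {w(p), w(q)}. *)
Definition walk_ends_at (n : nat) (w : list bool) (u v : nat * nat) : Prop :=
  (word_act n w (fst u) = fst v /\ word_act n w (snd u) = snd v) \/
  (word_act n w (fst u) = snd v /\ word_act n w (snd u) = fst v).

(* "the diameter of the pair digraph of F_n is at least x":
   some ordered pair of vertices (u,v) has every directed path from u to v of
   length >= x (i.e. the shortest-path distance d(u,v), possibly infinite, is >= x). *)
Definition pair_diam_ge (n : nat) (x : R) : Prop :=
  exists u v, pair_vertex n u /\ pair_vertex n v /\
    forall w : list bool, walk_ends_at n w u v -> (x <= INR (length w))%R.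

(* Main.v *)
Require Import Defs.
From Stdlib Require Import Reals Arith List.
From Stdlib Require Import ZArith Lia Bool Lra.

(* Proof strategy: potential-function lower bound.  States are mapped to
   "tokens" (a path coordinate Y in [-M,M] with M = (n-3)/2, or the two
   parked states q2, q4).  Psi is a potential on pairs of tokens which drops
   by at most 1 per letter; Psi({q3,q_{n-1}}) = M^2 and Psi({q2,q4}) = 2. *)

Module PotM.
Local Open Scope Z_scope.

Definition aY (M y : Z) : Z :=
  if Z.even y then (if y =? M then y else y + 1) else (if y =? - M then y else y - 1).
Definition bY (M y : Z) : Z :=
  if Z.even y then (if y =? - M then y else y - 1) else (if y =? M then y else y + 1).
Definition mu (M y1 y2 : Z) : Z :=
  let k := if Bool.eqb (Z.even y1) (Z.even y2)
           then (if y1 <=? y2 then y2 - y1 else y1 - y2)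
           else (if 0 <=? y1 + y2 then y1 + y2 else - (y1 + y2)) in
  if k <=? M then k else 2*M+1-k.

Ltac conv :=
  repeat match goal with
  | H : (_ =? _) = true |- _ => apply Z.eqb_eq in H
  | H : (_ =? _) = false |- _ => apply Z.eqb_neq in H
  | H : (_ <=? _) = true |- _ => apply Z.leb_le in H
  | H : (_ <=? _) = false |- _ => apply Z.leb_gt in H
  | H : (_ <? _) = true |- _ => apply Z.ltb_lt in H
  | H : (_ <? _) = false |- _ => apply Z.ltb_ge in H
  end.
Ltac dall :=
  repeat match goal with
  | |- context [if ?b then _ else _] => destruct b eqn:?
  end; conv.
Lemma even_fact y : Z.even y = true -> exists k, y = 2*k.
Proof. intro H. apply Z.even_spec in H. destruct H as [k Hk]. exists k. lia. Qed.
Lemma odd_fact y : Z.even y = false -> exists k, y = 2*k+1.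
Proof. intro H. assert (Z.odd y = true) by (rewrite <- Z.negb_even, H; reflexivity).
  apply Z.odd_spec in H0. destruct H0 as [k Hk]. exists k. lia. Qed.
Ltac parf :=
  repeat match goal with
  | H : Z.even ?y = true |- _ => let k := fresh "k" in destruct (even_fact y H) as [k ?]; clear H
  | H : Z.even ?y = false |- _ => let k := fresh "k" in destruct (odd_fact y H) as [k ?]; clear H
  end.
Ltac dallp :=
  repeat (match goal with |- context [if ?b then _ else _] => destruct b eqn:? end; conv; try (exfalso; lia)).
Ltac evs := rewrite ?Z.even_add, ?Z.even_sub, ?Z.even_opp; cbn [Z.even Bool.eqb negb].

Lemma mu_b M y1 y2 : 3 <= M -> -M <= y1 <= M -> -M <= y2 <= M -> y1 <> y2 ->
  mu M (bY M y1) (bY M y2) = mu M y1 y2.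
Proof.
  intros. unfold bY.
  destruct (Z.even y1) eqn:E1, (Z.even y2) eqn:E2;
  (destruct (y1 =? -M) eqn:?, (y1 =? M) eqn:?, (y2 =? -M) eqn:?, (y2 =? M) eqn:?; conv;
   unfold mu; cbv zeta; evs; rewrite ?E1, ?E2; cbn [Bool.eqb negb]; parf; try subst; dallp; try lia).
Qed.

Definition rest (M y1 y2 : Z) : Z :=
  let sp := Bool.eqb (Z.even y1) (Z.even y2) in
  let lo := Z.min y1 y2 in let hi := Z.max y1 y2 in
  let D := hi - lo in let S := lo + hi in let L := 2*M+1 in
  if hi <=? 0 then
    (if sp then 2*D - lo - 6 + (if D =? 2 then 2 else 0)
     else if - S <=? M then -4*S + lo + 3*M + 4
     else 2*(L+S) + 2*M - 5 + lo + (if L + S =? 2 then 2 else 0))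
  else if 1 <=? lo then
    (if sp then 4*D + lo - 4 + (if D =? 2 then 1 else 0)
     else if S <=? M then 4*S + lo + M - 1
     else 3*(L-S) + 2*M - 3 - hi + (if L - S =? 2 then 1 else 0))
  else
    (if sp then
       (if D <=? M then 4*D + lo + 2*M + 2
        else 3*(L-D) - hi + M - 4 + (if L - D =? 1 then 2 else 0))
     else if S <=? 0 then -4*S + lo + M - 4 + (if -S =? 1 then 2 else 0)
     else 4*S - lo - M - 5 + (if S =? 1 then 2 else 0)).

Lemma rest_b M y1 y2 : 3 <= M -> -M <= y1 <= M -> -M <= y2 <= M -> y1 <> y2 ->
  rest M y1 y2 <= rest M (bY M y1) (bY M y2) + 1.
Proof.
  intros. unfold bY.
  destruct (Z.even y1) eqn:E1, (Z.even y2) eqn:E2;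
  (destruct (y1 =? -M) eqn:?, (y1 =? M) eqn:?, (y2 =? -M) eqn:?, (y2 =? M) eqn:?; conv;
   try (exfalso; lia);
   unfold rest; cbv zeta; evs; rewrite ?E1, ?E2; cbn [Bool.eqb negb]; parf; try subst; dallp; try lia).
Qed.

Lemma mu_a M y1 y2 : 3 <= M -> -M <= y1 <= M -> -M <= y2 <= M -> y1 <> y2 ->
  y1 <> 0 -> y1 <> 1 -> y2 <> 0 -> y2 <> 1 ->
  mu M (aY M y1) (aY M y2) = mu M y1 y2.
Proof.
  intros. unfold aY.
  destruct (Z.even y1) eqn:E1, (Z.even y2) eqn:E2;
  (destruct (y1 =? -M) eqn:?, (y1 =? M) eqn:?, (y2 =? -M) eqn:?, (y2 =? M) eqn:?; conv;
   try (exfalso; lia);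
   unfold mu; cbv zeta; evs; rewrite ?E1, ?E2; cbn [Bool.eqb negb]; parf; try subst; dallp; try lia).
Qed.

Lemma rest_a M y1 y2 : 3 <= M -> -M <= y1 <= M -> -M <= y2 <= M -> y1 <> y2 ->
  y1 <> 0 -> y1 <> 1 -> y2 <> 0 -> y2 <> 1 ->
  rest M y1 y2 <= rest M (aY M y1) (aY M y2) + 1.
Proof.
  intros. unfold aY.
  destruct (Z.even y1) eqn:E1, (Z.even y2) eqn:E2;
  (destruct (y1 =? -M) eqn:?, (y1 =? M) eqn:?, (y2 =? -M) eqn:?, (y2 =? M) eqn:?; conv;
   try (exfalso; lia);
   unfold rest; cbv zeta; evs; rewrite ?E1, ?E2; cbn [Bool.eqb negb]; parf; try subst; dallp; try lia).
Qed.

End PotM.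
Import PotM.

Module GadM.
Local Open Scope Z_scope.

Definition cap (M y1 y2 : Z) : Z := Z.min (M * mu M y1 y2 + rest M y1 y2) (M*M).

Ltac peval :=
  repeat progress (rewrite ?Z.even_add, ?Z.even_sub, ?Z.even_opp); cbn [Z.even Bool.eqb negb];
  repeat match goal with H : Z.even ?x = ?b |- context [Z.even ?x] => rewrite H end;
  cbn [Bool.eqb negb]; cbv beta iota.
Ltac dstep :=
  match goal with |- context [if ?b then _ else _] =>
    lazymatch b with context [if _ then _ else _] => fail | _ => destruct b eqn:? end end;
  conv; try (exfalso; lia).
Ltac dloop := repeat (peval; dstep).

Definition G2 (M y : Z) : Z := if y =? 1 then 2*M+4 else 2*M+3.
Definition G4 (M y : Z) : Z := if y =? 1 then 2*M+5 else 2*M+2.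

Definition RR0 (M v : Z) : Z :=
  if 2 <=? v then
    (if Z.even v then (if v <=? M then M*v + 4*v + 2*M + 2
                       else M*(2*M+1-v) + 3*(2*M+1-v) - v + M - 4)
     else M*v + 4*v - M - 5)
  else
    (if Z.even v then M*(-v) - 3*v - 6 + (if v =? -2 then 2 else 0)
     else M*(-v) - 3*v + 3*M + 4).
Definition RR1 (M v : Z) : Z :=
  if 2 <=? v then
    (if Z.even v then
       (if v + 1 <=? M then M*(v+1) + 4*(v+1) + M
        else M*(2*M-v) + 3*(2*M-v) + 2*M - 3 - v + (if 2*M-v =? 2 then 1 else 0))
     else M*(v-1) + 4*(v-1) - 3 + (if v =? 3 then 1 else 0))
  else
    (if Z.even v then M*(-(v+1)) - 4*(v+1) + v + M - 4 + (if v =? -2 then 2 else 0)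
     else (if 1 - v <=? M then M*(1-v) + 4*(1-v) + v + 2*M + 2
           else M*(2*M+v) + 3*(2*M+v) + M - 5)).

Lemma cap0 M v : 10 <= M -> -M <= v <= M -> v <> 0 -> v <> 1 -> cap M 0 v = Z.min (RR0 M v) (M*M).
Proof.
  intros. unfold cap, RR0, mu, rest; cbv zeta.
  destruct (Z.even v) eqn:?; dloop; parf; f_equal; lia.
Qed.
Lemma cap1 M v : 10 <= M -> -M <= v <= M -> v <> 0 -> v <> 1 -> cap M 1 v = Z.min (RR1 M v) (M*M).
Proof.
  intros. unfold cap, RR1, mu, rest; cbv zeta.
  destruct (Z.even v) eqn:?; dloop; parf; f_equal; lia.
Qed.

Ltac ysplit M y :=
  assert (HS : y = M \/ y = M-1 \/ y = M-2 \/ y = M-3 \/ y = M-4 \/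
               y = -M \/ y = -M+1 \/ y = -M+2 \/ y = -M+3 \/ y = -M+4 \/
     (-M+4 < y < M-4)) by lia;
  destruct HS as [->|[->|[->|[->|[->|[->|[->|[->|[->|[->|HS]]]]]]]]]];
  [destruct (Z.even M) eqn:?..|destruct (Z.even y) eqn:?].

Lemma aY_range M y : 1 <= M -> -M <= y <= M -> -M <= aY M y <= M.
Proof. intros. unfold aY. destruct (Z.even y) eqn:E; parf; dloop; lia. Qed.
Lemma bY_range M y : 1 <= M -> -M <= y <= M -> -M <= bY M y <= M.
Proof. intros. unfold bY. destruct (Z.even y) eqn:E; parf; dloop; lia. Qed.
Lemma aY_n01 M y : 3 <= M -> -M <= y <= M -> y <> 0 -> y <> 1 -> aY M y <> 0 /\ aY M y <> 1.
Proof. intros. unfold aY. destruct (Z.even y) eqn:E; dloop; parf; lia. Qed.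

Lemma gad1 M y : 10 <= M -> -M <= y <= M -> y <> 0 -> y <> 1 ->
  cap M 1 y <= cap M 0 y + 2 /\ cap M 0 y <= cap M 1 y + 2.
Proof.
  intros. rewrite cap0, cap1 by lia. unfold RR0, RR1.
  ysplit M y; dloop; parf; lia.
Qed.

Lemma gad2c M y : 10 <= M -> -M <= y <= M -> y <> 0 -> y <> 1 ->
  bY M (aY M y) <> 0 -> bY M (aY M y) <> 1 ->
  cap M 1 y <= cap M 0 (aY M (bY M (aY M y))) + 3.
Proof.
  intros.
  pose proof (aY_range M y ltac:(lia) H0). pose proof (bY_range M (aY M y) ltac:(lia) H5).
  pose proof (aY_range M _ ltac:(lia) H6). destruct (aY_n01 M (bY M (aY M y)) ltac:(lia) H6 H3 H4).
  rewrite cap0, cap1 by lia. revert H3 H4 H5 H6 H7 H8 H9. unfold RR0, RR1, aY, bY.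
  ysplit M y; dloop; intros; parf; lia.
Qed.

Lemma gad2d M y : 10 <= M -> -M <= y <= M -> y <> 0 -> y <> 1 ->
  bY M (aY M y) <> 0 -> bY M (aY M y) <> 1 ->
  cap M 0 y <= cap M 1 (aY M (bY M (aY M y))) + 3.
Proof.
  intros.
  pose proof (aY_range M y ltac:(lia) H0). pose proof (bY_range M (aY M y) ltac:(lia) H5).
  pose proof (aY_range M _ ltac:(lia) H6). destruct (aY_n01 M (bY M (aY M y)) ltac:(lia) H6 H3 H4).
  rewrite cap0, cap1 by lia. revert H3 H4 H5 H6 H7 H8 H9. unfold RR0, RR1, aY, bY.
  ysplit M y; dloop; intros; parf; lia.
Qed.

Lemma gad2w M y : 10 <= M -> -M <= y <= M -> y <> 0 -> y <> 1 ->
  (bY M (aY M y) = 0 \/ bY M (aY M y) = 1) ->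
  cap M 1 y <= G2 M (bY M (aY M y)) + 2 /\ cap M 0 y <= G4 M (bY M (aY M y)) + 2.
Proof.
  intros. assert (y = -2 \/ y = 3) as [->| ->].
  { revert H3. unfold aY, bY. destruct (Z.even y) eqn:?; dloop; parf; lia. }
  all: rewrite cap0, cap1 by lia; unfold RR0, RR1, G2, G4, aY, bY; dloop; lia.
Qed.

End GadM.
Import GadM.

Module TokM.
Local Open Scope Z_scope.

Lemma aY_inv M y : 1 <= M -> -M <= y <= M -> aY M (aY M y) = y.
Proof. intros. unfold aY. destruct (Z.even y) eqn:E; dloop; parf; lia. Qed.
Lemma bY_inv M y : 1 <= M -> -M <= y <= M -> bY M (bY M y) = y.
Proof. intros. unfold bY. destruct (Z.even y) eqn:E; dloop; parf; lia. Qed.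

Lemma cap_sym M y1 y2 : y1 <> y2 -> cap M y1 y2 = cap M y2 y1.
Proof.
  intro. unfold cap, mu, rest. rewrite (Z.min_comm y2 y1), (Z.max_comm y2 y1).
  rewrite (Z.add_comm y2 y1). destruct (Z.even y1), (Z.even y2); cbn [Bool.eqb]; cbv zeta;
  repeat match goal with |- context [if ?b then _ else _] => destruct b eqn:? end; conv; f_equal; lia.
Qed.

Lemma cap_b M y1 y2 : 10 <= M -> -M <= y1 <= M -> -M <= y2 <= M -> y1 <> y2 ->
  cap M y1 y2 <= cap M (bY M y1) (bY M y2) + 1.
Proof.
  intros. unfold cap. rewrite mu_b by lia. pose proof (rest_b M y1 y2 ltac:(lia) H0 H1 H2). lia.
Qed.
Lemma cap_a M y1 y2 : 10 <= M -> -M <= y1 <= M -> -M <= y2 <= M -> y1 <> y2 ->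
  y1 <> 0 -> y1 <> 1 -> y2 <> 0 -> y2 <> 1 ->
  cap M y1 y2 <= cap M (aY M y1) (aY M y2) + 1.
Proof.
  intros. unfold cap. rewrite mu_a by lia. pose proof (rest_a M y1 y2 ltac:(lia) H0 H1 H2 H3 H4 H5 H6). lia.
Qed.

Inductive tk := TP (y : Z) | T2 | T4.

Definition ta (M : Z) (t : tk) : tk :=
  match t with
  | TP y => if y =? 0 then T4 else if y =? 1 then T2 else TP (aY M y)
  | T2 => TP 0
  | T4 => TP 1
  end.
Definition tb (M : Z) (t : tk) : tk :=
  match t with TP y => TP (bY M y) | T2 => T2 | T4 => T4 end.
Definition tact (M : Z) (c : bool) (t : tk) : tk := if c then ta M t else tb M t.

Definition vld (M : Z) (t : tk) : Prop :=
  match t with TP y => -M <= y <= M | _ => True end.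

Definition psi2 (M y : Z) : Z :=
  if (y =? 0) || (y =? 1) then G2 M y else
  let w := bY M y in
  Z.min (cap M 0 (aY M y) + 1) (if (w =? 0) || (w =? 1) then G2 M w + 1 else cap M 0 (aY M w) + 2).
Definition psi4 (M y : Z) : Z :=
  if (y =? 0) || (y =? 1) then G4 M y else
  let w := bY M y in
  Z.min (cap M 1 (aY M y) + 1) (if (w =? 0) || (w =? 1) then G4 M w + 1 else cap M 1 (aY M w) + 2).

Definition Psi (M : Z) (t1 t2 : tk) : Z :=
  match t1, t2 with
  | TP y1, TP y2 => cap M y1 y2
  | T2, TP y | TP y, T2 => psi2 M y
  | T4, TP y | TP y, T4 => psi4 M y
  | _, _ => 2
  end.

Lemma cap01 M : 10 <= M -> cap M 0 1 = 1.
Proof. intros. unfold cap, mu, rest. cbv zeta. dloop. lia. Qed.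

Lemma tact_vld M c t : 1 <= M -> vld M t -> vld M (tact M c t).
Proof.
  intros. destruct c, t; cbn in *; auto; try lia.
  - destruct (y =? 0), (y =? 1); cbn; auto. apply aY_range; lia.
  - apply bY_range; lia.
Qed.

Lemma ta_inj M t1 t2 : 10 <= M -> vld M t1 -> vld M t2 -> ta M t1 = ta M t2 -> t1 = t2.
Proof.
  intros Hm H1 H2 E. destruct t1 as [y1| |], t2 as [y2| |]; cbn in *; auto;
  repeat match goal with H : context [if ?b then _ else _] |- _ => destruct b eqn:? end; conv;
  try discriminate; try (f_equal; lia).
  - inversion E. f_equal. rewrite <- (aY_inv M y1), <- (aY_inv M y2) by lia. congruence.
  - inversion E. edestruct (aY_n01 M y1); try lia.
  - inversion E. edestruct (aY_n01 M y1); try lia.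
  - inversion E. edestruct (aY_n01 M y2); try lia.
  - inversion E. edestruct (aY_n01 M y2); try lia.
Qed.
Lemma tb_inj M t1 t2 : 1 <= M -> vld M t1 -> vld M t2 -> tb M t1 = tb M t2 -> t1 = t2.
Proof.
  intros Hm H1 H2 E. destruct t1 as [y1| |], t2 as [y2| |]; cbn in *; auto; try discriminate.
  inversion E. f_equal. rewrite <- (bY_inv M y1), <- (bY_inv M y2) by lia. congruence.
Qed.

Lemma aY_n01' M y : 10 <= M -> -M <= y <= M -> y <> 0 -> y <> 1 -> (aY M y =? 0) || (aY M y =? 1) = false.
Proof. intros. destruct (aY_n01 M y); lia. Qed.

Lemma psi2_a_in M y : 10 <= M -> -M <= y <= M -> y <> 0 -> y <> 1 ->
  cap M 1 y <= psi2 M (aY M y) + 1.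
Proof.
  intros. unfold psi2. rewrite aY_n01' by lia. cbv zeta. rewrite aY_inv by lia.
  destruct (gad1 M y) as [? ?]; try lia.
  destruct ((bY M (aY M y) =? 0) || (bY M (aY M y) =? 1)) eqn:E.
  - apply orb_true_iff in E.
    assert (bY M (aY M y) = 0 \/ bY M (aY M y) = 1) as HE
      by (destruct E as [E|E]; apply Z.eqb_eq in E; auto).
    destruct (gad2w M y) as [? ?]; auto; lia.
  - apply orb_false_iff in E. destruct E as [E1 E2]. apply Z.eqb_neq in E1, E2.
    pose proof (gad2c M y). lia.
Qed.

Lemma psi4_a_in M y : 10 <= M -> -M <= y <= M -> y <> 0 -> y <> 1 ->
  cap M 0 y <= psi4 M (aY M y) + 1.
Proof.
  intros. unfold psi4. rewrite aY_n01' by lia. cbv zeta. rewrite aY_inv by lia.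
  destruct (gad1 M y) as [? ?]; try lia.
  destruct ((bY M (aY M y) =? 0) || (bY M (aY M y) =? 1)) eqn:E.
  - apply orb_true_iff in E.
    assert (bY M (aY M y) = 0 \/ bY M (aY M y) = 1) as HE
      by (destruct E as [E|E]; apply Z.eqb_eq in E; auto).
    destruct (gad2w M y) as [? ?]; auto; lia.
  - apply orb_false_iff in E. destruct E as [E1 E2]. apply Z.eqb_neq in E1, E2.
    pose proof (gad2d M y). lia.
Qed.

Lemma psi2_le M y : 10 <= M -> -M <= y <= M -> y <> 0 -> y <> 1 -> psi2 M y <= cap M 0 (aY M y) + 1.
Proof.
  intros. unfold psi2. replace ((y =? 0) || (y =? 1)) with false.
  2:{ symmetry. apply orb_false_iff; split; apply Z.eqb_neq; auto. } cbv zeta. lia.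
Qed.
Lemma psi4_le M y : 10 <= M -> -M <= y <= M -> y <> 0 -> y <> 1 -> psi4 M y <= cap M 1 (aY M y) + 1.
Proof.
  intros. unfold psi4. replace ((y =? 0) || (y =? 1)) with false.
  2:{ symmetry. apply orb_false_iff; split; apply Z.eqb_neq; auto. } cbv zeta. lia.
Qed.

Lemma psi2_b M y : 10 <= M -> -M <= y <= M -> psi2 M y <= psi2 M (bY M y) + 1.
Proof.
  intros. pose proof (bY_inv M y ltac:(lia) H0) as Hi.
  destruct (Z.eq_dec y 0) as [->|?]; [|destruct (Z.eq_dec y 1) as [->|?]].
  - unfold psi2, aY, bY, G2. dloop. rewrite cap0 by lia. unfold RR0. dloop. assert (10*M <= M*M) by nia. lia.
  - unfold psi2, aY, bY, G2. dloop. rewrite cap0 by lia. unfold RR0. dloop. assert (10*M <= M*M) by nia. lia.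
  - unfold psi2 at 1. replace ((y =? 0) || (y =? 1)) with false.
    2:{ symmetry. apply orb_false_iff; split; apply Z.eqb_neq; auto. } cbv zeta.
    destruct ((bY M y =? 0) || (bY M y =? 1)) eqn:E.
    + unfold psi2. rewrite E. lia.
    + unfold psi2. rewrite E. cbv zeta. rewrite Hi.
      replace ((y =? 0) || (y =? 1)) with false.
      2:{ symmetry. apply orb_false_iff; split; apply Z.eqb_neq; auto. } lia.
Qed.
Lemma psi4_b M y : 10 <= M -> -M <= y <= M -> psi4 M y <= psi4 M (bY M y) + 1.
Proof.
  intros. pose proof (bY_inv M y ltac:(lia) H0) as Hi.
  destruct (Z.eq_dec y 0) as [->|?]; [|destruct (Z.eq_dec y 1) as [->|?]].
  - unfold psi4, aY, bY, G4. dloop. rewrite cap1 by lia. unfold RR1. dloop. assert (10*M <= M*M) by nia. lia.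
  - unfold psi4, aY, bY, G4. dloop. rewrite cap1 by lia. unfold RR1. dloop. assert (10*M <= M*M) by nia. lia.
  - unfold psi4 at 1. replace ((y =? 0) || (y =? 1)) with false.
    2:{ symmetry. apply orb_false_iff; split; apply Z.eqb_neq; auto. } cbv zeta.
    destruct ((bY M y =? 0) || (bY M y =? 1)) eqn:E.
    + unfold psi4. rewrite E. lia.
    + unfold psi4. rewrite E. cbv zeta. rewrite Hi.
      replace ((y =? 0) || (y =? 1)) with false.
      2:{ symmetry. apply orb_false_iff; split; apply Z.eqb_neq; auto. } lia.
Qed.

Lemma G_vals M : G2 M 0 = 2*M+3 /\ G2 M 1 = 2*M+4 /\ G4 M 0 = 2*M+2 /\ G4 M 1 = 2*M+5.
Proof. unfold G2, G4. cbn. lia. Qed.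

Lemma psi_gad M : psi2 M 0 = 2*M+3 /\ psi2 M 1 = 2*M+4 /\ psi4 M 0 = 2*M+2 /\ psi4 M 1 = 2*M+5.
Proof. unfold psi2, psi4, G2, G4. cbn. lia. Qed.

Lemma step M c t1 t2 : 10 <= M -> vld M t1 -> vld M t2 -> t1 <> t2 ->
  Psi M t1 t2 <= Psi M (tact M c t1) (tact M c t2) + 1.
Proof.
  intros HM V1 V2 D. pose proof (psi_gad M) as [P20 [P21 [P40 P41]]].
  pose proof (cap01 M HM) as C01.
  destruct c; cbn [tact].
  - destruct t1 as [y1| |], t2 as [y2| |]; cbn [vld] in *; cbn [ta Psi].
    + assert (y1 <> y2) by congruence.
      destruct (Z.eq_dec y1 0) as [->|?]; [|destruct (Z.eq_dec y1 1) as [->|?]];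
      (destruct (Z.eq_dec y2 0) as [->|?]; [|destruct (Z.eq_dec y2 1) as [->|?]]);
      try lia;
      repeat match goal with H : ?y <> ?c |- context [?y =? ?c] =>
        replace (y =? c) with false by (symmetry; apply Z.eqb_neq; exact H) end;
      cbv beta iota delta [Z.eqb Pos.eqb]; cbn [Psi].
      * lia.
      * apply psi4_a_in; lia.
      * rewrite cap_sym by lia. lia.
      * apply psi2_a_in; lia.
      * rewrite cap_sym by lia. apply psi4_a_in; lia.
      * rewrite cap_sym by lia. apply psi2_a_in; lia.
      * apply cap_a; lia.
    + destruct (Z.eq_dec y1 0) as [->|?]; [|destruct (Z.eq_dec y1 1) as [->|?]];
      repeat match goal with H : ?y <> ?c |- context [?y =? ?c] =>
        replace (y =? c) with false by (symmetry; apply Z.eqb_neq; exact H) end;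
      cbv beta iota delta [Z.eqb Pos.eqb]; cbn [Psi]; try lia. rewrite cap_sym by (edestruct (aY_n01 M y1); lia). apply psi2_le; lia.
    + destruct (Z.eq_dec y1 0) as [->|?]; [|destruct (Z.eq_dec y1 1) as [->|?]];
      repeat match goal with H : ?y <> ?c |- context [?y =? ?c] =>
        replace (y =? c) with false by (symmetry; apply Z.eqb_neq; exact H) end;
      cbv beta iota delta [Z.eqb Pos.eqb]; cbn [Psi]; try lia. rewrite cap_sym by (edestruct (aY_n01 M y1); lia). apply psi4_le; lia.
    + destruct (Z.eq_dec y2 0) as [->|?]; [|destruct (Z.eq_dec y2 1) as [->|?]];
      repeat match goal with H : ?y <> ?c |- context [?y =? ?c] =>
        replace (y =? c) with false by (symmetry; apply Z.eqb_neq; exact H) end;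
      cbv beta iota delta [Z.eqb Pos.eqb]; cbn [Psi]; try lia. apply psi2_le; lia.
    + congruence.
    + lia.
    + destruct (Z.eq_dec y2 0) as [->|?]; [|destruct (Z.eq_dec y2 1) as [->|?]];
      repeat match goal with H : ?y <> ?c |- context [?y =? ?c] =>
        replace (y =? c) with false by (symmetry; apply Z.eqb_neq; exact H) end;
      cbv beta iota delta [Z.eqb Pos.eqb]; cbn [Psi]; try lia. apply psi4_le; lia.
    + rewrite cap_sym by lia. lia.
    + congruence.
  - destruct t1 as [y1| |], t2 as [y2| |]; cbn [vld] in *; cbn [tb Psi].
    + apply cap_b; auto. congruence.
    + apply psi2_b; lia.
    + apply psi4_b; lia.
    + apply psi2_b; lia.
    + congruence.
    + lia.
    + apply psi4_b; lia.
    + lia.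
    + congruence.
Qed.

End TokM.
Import TokM.

Module BrM.
Local Open Scope nat_scope.

Lemma ex_at (f : nat -> bool) a k i0 : (forall i, f i = true -> i = i0) ->
  existsb f (List.seq a k) = ((a <=? i0) && (i0 <? a + k) && f i0)%bool.
Proof.
  intros H. revert a. induction k as [|k IH]; intros a; cbn [List.seq existsb].
  - destruct (a <=? i0) eqn:E1, (i0 <? a + 0) eqn:E2; cbn; auto.
    apply Nat.leb_le in E1. apply Nat.ltb_lt in E2. lia.
  - rewrite IH. destruct (f a) eqn:Fa.
    + pose proof (H a Fa). subst. rewrite Nat.leb_refl.
      replace (i0 <? i0 + S k) with true by (symmetry; apply Nat.ltb_lt; lia). rewrite Fa. reflexivity.
    + rewrite orb_false_l. destruct (Nat.eq_dec a i0) as [->|Hne].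
      * rewrite Fa. rewrite !andb_false_r. reflexivity.
      * replace (S a + k) with (a + S k) by lia. f_equal. f_equal.
        destruct (S a <=? i0) eqn:E1, (a <=? i0) eqn:E3; auto;
        repeat match goal with H : (_ <=? _) = _ |- _ => first [apply Nat.leb_le in H | apply Nat.leb_gt in H] end;
        lia.
Qed.

Lemma half m : (2 * m + 3 - 3) / 2 = m.
Proof. replace (2 * m + 3 - 3) with (m * 2) by lia. apply Nat.div_mul. lia. Qed.

Ltac exat i0 :=
  rewrite (ex_at _ _ _ i0) by (intros ?i ?Hi; apply andb_true_iff in Hi; destruct Hi as [_ Hi];
                                apply Nat.eqb_eq in Hi; lia).

Lemma chain_odd m seli selj k : 1 <= k <= m + 1 ->
  chain_swap (2*m+3) seli selj (2*k+1) =
  if (k <=? m) && seli k then 2*k+1+2 else if (2 <=? k) && seli (k-1) then 2*k+1-2 else 2*k+1.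
Proof.
  intros Hk. unfold chain_swap, i_range, j_range. rewrite half.
  exat k. exat (k-1). exat 0. exat 0.
  rewrite Nat.eqb_refl. replace (2 * k + 1 =? 2 * (k - 1) + 3) with ((2 <=? k) || (k =? 1)).
  2:{ destruct (2 <=? k) eqn:E, (k =? 1) eqn:E2, (2 * k + 1 =? 2 * (k - 1) + 3) eqn:E3; auto;
      repeat match goal with H : (_ <=? _) = _ |- _ => first [apply Nat.leb_le in H | apply Nat.leb_gt in H]
                        | H : (_ =? _) = _ |- _ => first [apply Nat.eqb_eq in H | apply Nat.eqb_neq in H] end; lia. }
  replace (1 <=? k) with true by (symmetry; apply Nat.leb_le; lia).
  replace (k <? 1 + m) with (k <=? m) by (destruct (k <? 1 + m) eqn:E, (k <=? m) eqn:E2; auto;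
      repeat match goal with H : (_ <=? _) = _ |- _ => first [apply Nat.leb_le in H | apply Nat.leb_gt in H]
                        | H : (_ <? _) = _ |- _ => first [apply Nat.ltb_lt in H | apply Nat.ltb_ge in H] end; lia).
  replace (3 <=? 0) with false by reflexivity. cbn [andb].
  replace (1 <=? k - 1) with (2 <=? k) by (destruct (1 <=? k - 1) eqn:E, (2 <=? k) eqn:E2; auto;
      repeat match goal with H : (_ <=? _) = _ |- _ => first [apply Nat.leb_le in H | apply Nat.leb_gt in H] end; lia).
  replace (k - 1 <? 1 + m) with true by (symmetry; apply Nat.ltb_lt; lia).
  destruct (k <=? m), (seli k), (2 <=? k), (seli (k-1)), (k =? 1); cbn; auto.
Qed.

Ltac bconv :=
  repeat match goal with H : (_ <=? _) = _ |- _ => first [apply Nat.leb_le in H | apply Nat.leb_gt in H]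
                   | H : (_ <? _) = _ |- _ => first [apply Nat.ltb_lt in H | apply Nat.ltb_ge in H]
                   | H : (_ =? _) = _ |- _ => first [apply Nat.eqb_eq in H | apply Nat.eqb_neq in H] end.

Lemma chain_even m seli selj j : 2 <= m -> 1 <= j <= m + 1 ->
  chain_swap (2*m+3) seli selj (2*j) =
  if (3 <=? j) && (j <=? m) && selj j then 2*j+2 else if (4 <=? j) && selj (j-1) then 2*j-2 else 2*j.
Proof.
  intros Hm Hj. unfold chain_swap, i_range, j_range. rewrite half.
  exat 0. exat 0. exat j. exat (j-1).
  rewrite Nat.eqb_refl. cbn [andb]. replace (1 <=? 0) with false by reflexivity. cbn [andb].
  replace (j <? 3 + (m - 2)) with (j <=? m) by (destruct (j <? 3 + (m - 2)) eqn:E, (j <=? m) eqn:E2; auto; bconv; lia).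
  replace (3 <=? j - 1) with (4 <=? j) by (destruct (3 <=? j - 1) eqn:E, (4 <=? j) eqn:E2; auto; bconv; lia).
  replace (j - 1 <? 3 + (m - 2)) with true by (symmetry; apply Nat.ltb_lt; lia).
  replace (2 * j =? 2 * (j - 1) + 2) with (1 <=? j) by (destruct (2 * j =? 2 * (j - 1) + 2) eqn:E, (1 <=? j) eqn:E2; auto; bconv; lia).
  replace (1 <=? j) with true by (symmetry; apply Nat.leb_le; lia).
  destruct (3 <=? j), (j <=? m), (selj j), (4 <=? j), (selj (j-1)); cbn; auto.
Qed.

End BrM.
Import BrM.

Module Br2M.
Local Open Scope nat_scope.

Lemma nev p : Nat.even (2*p) = true.
Proof. apply Nat.even_spec. exists p. reflexivity. Qed.
Lemma nod p : Nat.even (2*p+1) = false.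
Proof. rewrite <- Nat.negb_odd. rewrite (proj2 (Nat.odd_spec (2*p+1))); auto. exists p. reflexivity. Qed.
Lemma zev x : Z.even (2*x)%Z = true.
Proof. apply Z.even_spec. exists x. reflexivity. Qed.
Lemma zod x : Z.even (2*x+1)%Z = false.
Proof. rewrite <- Z.negb_odd. rewrite (proj2 (Z.odd_spec (2*x+1)%Z)); auto. exists x. reflexivity. Qed.

Definition tok (q : nat) : tk :=
  if (q =? 2)%nat then T2 else if (q =? 4)%nat then T4 else
  if Nat.odd q then TP (1 - Z.of_nat (Nat.div2 q))%Z else TP (Z.of_nat (Nat.div2 q) - 1)%Z.

Lemma tok_odd k : tok (2*k+1) = TP (1 - Z.of_nat k)%Z.
Proof.
  unfold tok. replace (2*k+1 =? 2) with false by (symmetry; apply Nat.eqb_neq; lia).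
  replace (2*k+1 =? 4) with false by (symmetry; apply Nat.eqb_neq; lia).
  rewrite <- Nat.negb_even. replace (2*k+1) with (S (2*k)) by lia.
  rewrite Nat.div2_succ_double. rewrite Nat.even_succ, <- Nat.negb_even, nev. reflexivity.
Qed.
Lemma tok_even j : 3 <= j -> tok (2*j) = TP (Z.of_nat j - 1)%Z.
Proof.
  intros. unfold tok. replace (2*j =? 2) with false by (symmetry; apply Nat.eqb_neq; lia).
  replace (2*j =? 4) with false by (symmetry; apply Nat.eqb_neq; lia).
  rewrite <- Nat.negb_even, nev, Nat.div2_double. reflexivity.
Qed.

Lemma zeven_nat k : Z.even (Z.of_nat k) = Nat.even k.
Proof.
  destruct (Nat.Even_or_Odd k) as [[p ->]|[p ->]].
  - rewrite nev. rewrite Nat2Z.inj_mul. apply zev.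
  - rewrite nod. rewrite Nat2Z.inj_add, Nat2Z.inj_mul. apply zod.
Qed.

Ltac zfin :=
  rewrite ?Z.even_sub, ?Z.even_add, ?zeven_nat, ?nev, ?nod; cbn [Z.even Bool.eqb negb];
  repeat match goal with |- context [(?a =? ?b)%Z] => destruct (Z.eqb_spec a b); try lia end;
  try (f_equal; lia).

Lemma tok_odd' q k : q = 2*k+1 -> tok q = TP (1 - Z.of_nat k)%Z.
Proof. intros ->. apply tok_odd. Qed.
Lemma tok_even' q j : 3 <= j -> q = 2*j -> tok q = TP (Z.of_nat j - 1)%Z.
Proof. intros ? ->. apply tok_even; auto. Qed.

Lemma a_odd m k : 10 <= m -> 2 <= k <= m+1 ->
  tok (a_act (2*m+3) (2*k+1)) = ta (Z.of_nat m) (TP (1 - Z.of_nat k)%Z) /\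
  1 <= a_act (2*m+3) (2*k+1) <= 2*m+3.
Proof.
  intros Hm Hk. unfold a_act.
  do 4 (rewrite (proj2 (Nat.eqb_neq _ _)) by lia).
  rewrite chain_odd by lia.
  replace (2 <=? k) with true by (symmetry; apply Nat.leb_le; lia). cbn [andb].
  unfold ta. do 2 (rewrite (proj2 (Z.eqb_neq _ _)) by lia). unfold aY.
  destruct (Nat.Even_or_Odd k) as [[p ->]|[p ->]].
  - rewrite nev. destruct (2*p <=? m) eqn:E; bconv; cbn [andb].
    + split; [|lia]. rewrite (tok_odd' _ (2*p+1)) by lia. zfin.
    + replace (Nat.even (2*p-1)) with false.
      2:{ replace (2*p-1) with (2*(p-1)+1) by lia. rewrite nod. reflexivity. }
      split; [|lia]. rewrite (tok_odd' _ (2*p)) by lia. zfin.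
  - rewrite nod, andb_false_r. replace (2*p+1-1) with (2*p) by lia. rewrite nev.
    split; [|lia]. rewrite (tok_odd' _ (2*p)) by lia. zfin.
Qed.

Lemma b_odd m k : 10 <= m -> 1 <= k <= m+1 ->
  tok (b_act (2*m+3) (2*k+1)) = tb (Z.of_nat m) (TP (1 - Z.of_nat k)%Z) /\
  1 <= b_act (2*m+3) (2*k+1) <= 2*m+3.
Proof.
  intros Hm Hk. unfold b_act.
  do 2 (rewrite (proj2 (Nat.eqb_neq _ _)) by lia).
  rewrite chain_odd by lia. rewrite <- !Nat.negb_even.
  unfold tb, bY.
  destruct (Nat.Even_or_Odd k) as [[p ->]|[p ->]].
  - rewrite nev, andb_false_r. cbn [negb andb].
    replace (Nat.even (2*p-1)) with false.
    2:{ replace (2*p-1) with (2*(p-1)+1) by lia. rewrite nod. reflexivity. }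
    cbn [negb]. rewrite andb_true_r.
    destruct (2 <=? 2*p) eqn:E; bconv.
    + split; [|lia]. rewrite (tok_odd' _ (2*p-1)) by lia. zfin.
    + lia.
  - rewrite nod. cbn [negb]. rewrite andb_true_r.
    destruct (2*p+1 <=? m) eqn:E; bconv.
    + split; [|lia]. rewrite (tok_odd' _ (2*p+2)) by lia. zfin.
    + replace (2*p+1-1) with (2*p) by lia. rewrite nev. cbn [negb]. rewrite andb_false_r.
      split; [|lia]. rewrite (tok_odd' _ (2*p+1)) by lia. zfin.
Qed.

Lemma a_even m j : 10 <= m -> 3 <= j <= m+1 ->
  tok (a_act (2*m+3) (2*j)) = ta (Z.of_nat m) (TP (Z.of_nat j - 1)%Z) /\
  1 <= a_act (2*m+3) (2*j) <= 2*m+3.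
Proof.
  intros Hm Hj. unfold a_act.
  do 4 (rewrite (proj2 (Nat.eqb_neq _ _)) by lia).
  rewrite chain_even by lia. rewrite <- !Nat.negb_even.
  unfold ta. do 2 (rewrite (proj2 (Z.eqb_neq _ _)) by lia). unfold aY.
  replace (3 <=? j) with true by (symmetry; apply Nat.leb_le; lia). cbn [andb].
  destruct (Nat.Even_or_Odd j) as [[p ->]|[p ->]].
  - rewrite nev, andb_false_r. cbn [negb].
    replace (Nat.even (2*p-1)) with false.
    2:{ replace (2*p-1) with (2*(p-1)+1) by lia. rewrite nod. reflexivity. }
    cbn [negb]. rewrite andb_true_r.
    replace (4 <=? 2*p) with true by (symmetry; apply Nat.leb_le; lia).
    split; [|lia]. rewrite (tok_even' _ (2*p-1)) by lia. zfin.
  - rewrite nod. cbn [negb]. rewrite andb_true_r.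
    destruct (2*p+1 <=? m) eqn:E; bconv.
    + split; [|lia]. rewrite (tok_even' _ (2*p+2)) by lia. zfin.
    + replace (2*p+1-1) with (2*p) by lia. rewrite nev. cbn [negb]. rewrite andb_false_r.
      split; [|lia]. rewrite (tok_even' _ (2*p+1)) by lia. zfin.
Qed.

Lemma b_even m j : 10 <= m -> 4 <= j <= m+1 ->
  tok (b_act (2*m+3) (2*j)) = tb (Z.of_nat m) (TP (Z.of_nat j - 1)%Z) /\
  1 <= b_act (2*m+3) (2*j) <= 2*m+3.
Proof.
  intros Hm Hj. unfold b_act.
  do 2 (rewrite (proj2 (Nat.eqb_neq _ _)) by lia).
  rewrite chain_even by lia.
  unfold tb, bY.
  replace (3 <=? j) with true by (symmetry; apply Nat.leb_le; lia).
  replace (4 <=? j) with true by (symmetry; apply Nat.leb_le; lia). cbn [andb].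
  destruct (Nat.Even_or_Odd j) as [[p ->]|[p ->]].
  - rewrite nev, andb_true_r.
    destruct (2*p <=? m) eqn:E; bconv.
    + split; [|lia]. rewrite (tok_even' _ (2*p+1)) by lia. zfin.
    + replace (Nat.even (2*p-1)) with false.
      2:{ replace (2*p-1) with (2*(p-1)+1) by lia. rewrite nod. reflexivity. }
      split; [|lia]. rewrite (tok_even' _ (2*p)) by lia. zfin.
  - rewrite nod, andb_false_r.
    replace (2*p+1-1) with (2*p) by lia. rewrite nev.
    split; [|lia]. rewrite (tok_even' _ (2*p)) by lia. zfin.
Qed.

Lemma ch2 m s t : 2 <= m -> chain_swap (2*m+3) s t 2 = 2.
Proof. intros. pose proof (chain_even m s t 1 H ltac:(lia)) as E. rewrite Nat.mul_1_r in E. rewrite E. reflexivity. Qed.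
Lemma ch4 m s t : 2 <= m -> chain_swap (2*m+3) s t 4 = 4.
Proof. intros. pose proof (chain_even m s t 2 H ltac:(lia)) as E. replace (2*2) with 4 in E by reflexivity. rewrite E. reflexivity. Qed.

Lemma bridge m c q : 10 <= m -> 1 <= q <= 2*m+3 ->
  tok (letter_act (2*m+3) c q) = tact (Z.of_nat m) c (tok q) /\
  1 <= letter_act (2*m+3) c q <= 2*m+3.
Proof.
  intros Hm Hq. unfold letter_act, tact.
  destruct (Nat.Even_or_Odd q) as [[j ->]|[k ->]].
  - assert (1 <= j <= m+1) by lia.
    destruct (Nat.eq_dec j 1) as [->|?]; [|destruct (Nat.eq_dec j 2) as [->|?]];
    [| |destruct (Nat.eq_dec j 3) as [->|?]].
    + replace (2*1) with 2 by reflexivity. destruct c.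
      * unfold a_act. cbn [Nat.eqb]. split; [reflexivity|lia].
      * unfold b_act. cbn [Nat.eqb]. rewrite ch2 by lia. split; [reflexivity|lia].
    + replace (2*2) with 4 by reflexivity. destruct c.
      * unfold a_act. cbn [Nat.eqb]. split; [reflexivity|lia].
      * unfold b_act. cbn [Nat.eqb]. rewrite ch4 by lia. split; [reflexivity|lia].
    + destruct c.
      * rewrite tok_even by lia. apply a_even; lia.
      * replace (2*3) with 6 by reflexivity. unfold b_act. cbn [Nat.eqb]. split; [|lia].
        rewrite (tok_odd' 1 0) by lia. rewrite (tok_even' 6 3) by lia. unfold tb, bY. zfin.
    + rewrite tok_even by lia. destruct c; [apply a_even | apply b_even]; lia.
  - rewrite tok_odd. destruct (Nat.eq_dec k 0) as [->|?]; [|destruct (Nat.eq_dec k 1) as [->|?]].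
    + replace (2*0+1) with 1 by reflexivity. destruct c.
      * unfold a_act. cbn [Nat.eqb]. split; [reflexivity|lia].
      * unfold b_act. cbn [Nat.eqb]. split; [|lia]. rewrite (tok_even' 6 3) by lia.
        unfold tb, bY. zfin.
    + destruct c.
      * replace (2*1+1) with 3 by reflexivity. unfold a_act. cbn [Nat.eqb]. split; [reflexivity|lia].
      * apply b_odd; lia.
    + destruct c; [apply a_odd | apply b_odd]; lia.
Qed.

End Br2M.
Import Br2M.

Module MainM.
Local Open Scope nat_scope.

Definition tword (M : Z) (w : list bool) (t : tk) : tk := fold_left (fun x c => tact M c x) w t.

Lemma word_bridge m w q : 10 <= m -> 1 <= q <= 2*m+3 ->
  tok (word_act (2*m+3) w q) = tword (Z.of_nat m) w (tok q) /\ 1 <= word_act (2*m+3) w q <= 2*m+3.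
Proof.
  intros Hm. revert q. induction w as [|c w IH]; intros q Hq.
  - cbn. auto.
  - unfold word_act, tword in *. cbn [fold_left].
    destruct (bridge m c q Hm Hq) as [E R].
    destruct (IH _ R) as [E2 R2]. rewrite E2, E. auto.
Qed.

Lemma tact_inj M c t1 t2 : (10 <= M)%Z -> vld M t1 -> vld M t2 -> t1 <> t2 -> tact M c t1 <> tact M c t2.
Proof.
  intros. intro E. destruct c; cbn in E.
  - apply ta_inj in E; auto.
  - apply tb_inj in E; auto. lia.
Qed.

Lemma pot_walk M w t1 t2 : (10 <= M)%Z -> vld M t1 -> vld M t2 -> t1 <> t2 ->
  (Psi M t1 t2 <= Psi M (tword M w t1) (tword M w t2) + Z.of_nat (length w))%Z.
Proof.
  intros HM. revert t1 t2. induction w as [|c w IH]; intros t1 t2 V1 V2 D.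
  - cbn. lia.
  - unfold tword in *. cbn [fold_left length].
    pose proof (step M c t1 t2 HM V1 V2 D).
    pose proof (IH (tact M c t1) (tact M c t2) (tact_vld M c t1 ltac:(lia) V1) (tact_vld M c t2 ltac:(lia) V2)
                   (tact_inj M c t1 t2 HM V1 V2 D)).
    lia.
Qed.

Lemma capM M : (10 <= M)%Z -> cap M 0 M = (M*M)%Z.
Proof.
  intros. rewrite cap0 by lia. unfold RR0.
  destruct (Z.even M); dloop; lia.
Qed.

Lemma big_case m w : 10 <= m ->
  walk_ends_at (2*m+3) w (3, 2*m+2) (2, 4) -> m*m <= length w + 2.
Proof.
  intros Hm Hw.
  assert (T3 : tok 3 = TP 0%Z) by (rewrite (tok_odd' 3 1) by lia; reflexivity).
  assert (TM : tok (2*m+2) = TP (Z.of_nat m)) by (rewrite (tok_even' _ (m+1)) by lia; f_equal; lia).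
  assert (T2e : tok 2 = T2) by reflexivity. assert (T4e : tok 4 = T4) by reflexivity.
  assert (HM : (10 <= Z.of_nat m)%Z) by lia.
  pose proof (pot_walk (Z.of_nat m) w (TP 0%Z) (TP (Z.of_nat m)) HM ltac:(cbn; lia) ltac:(cbn; lia)
                ltac:(intro E; inversion E; lia)) as P.
  cbn [Psi] in P. rewrite capM in P by lia.
  destruct (word_bridge m w 3 Hm ltac:(lia)) as [E1 _].
  destruct (word_bridge m w (2*m+2) Hm ltac:(lia)) as [E2 _].
  rewrite T3 in E1. rewrite TM in E2.
  unfold walk_ends_at in Hw. cbn [fst snd] in Hw.
  destruct Hw as [[H1 H2]|[H1 H2]]; rewrite H1 in E1; rewrite H2 in E2;
  rewrite <- E1, <- E2 in P; cbn [tok Psi Nat.eqb] in P; nia.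
Qed.

Local Open Scope R_scope.

Lemma ucv : Un_cv (fun n => ((-(3/2) * INR n - 100) / (INR n ^ 2))%R) 0%R.
Proof.
  intros eps Heps.
  destruct (INR_archimed eps 102 Heps) as [N HN].
  exists (Nat.max N 1). intros n Hn.
  assert (Hx1 : 1 <= INR n).
  { replace 1 with (INR 1) by reflexivity. apply le_INR. lia. }
  assert (HxN : INR N <= INR n) by (apply le_INR; lia).
  assert (Hxe : INR n * eps > 102) by nra.
  set (x := INR n) in *.
  assert (Hd : x ^ 2 > 0) by nra.
  set (d := / x ^ 2).
  assert (Hdp : d > 0) by (apply Rinv_0_lt_compat; lra).
  assert (Hdd : d * x ^ 2 = 1) by (unfold d; field; lra).
  unfold R_dist. rewrite Rminus_0_r. unfold Rdiv. fold d.
  apply Rabs_def1.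
  - assert ((- (3 / 2) * x - 100) < 0) by lra. nra.
  - assert (H1 : eps * x ^ 2 > 102 * x) by nra.
    assert (H2 : eps * x ^ 2 > 3/2 * x + 100) by lra.
    assert (H3 : eps * x ^ 2 * d > (3/2 * x + 100) * d) by (apply Rmult_lt_compat_r; lra).
    replace (eps * x ^ 2 * d) with eps in H3 by (rewrite Rmult_assoc, (Rmult_comm (x^2) d), Hdd; ring).
    lra.
Qed.

Lemma theorem5_aux :
  exists g : nat -> R,
    Un_cv (fun n => (g n / (INR n ^ 2))%R) 0%R /\
    forall n : nat, (7 <= n)%nat -> Nat.odd n = true ->
      pair_diam_ge n (INR n ^ 2 / 4 + g n)%R.
Proof.
  exists (fun n => (-(3/2) * INR n - 100)%R). split; [exact ucv|].
  intros n Hn Ho.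
  apply Nat.odd_spec in Ho. destruct Ho as [k Hk].
  assert (exists m, n = (2 * m + 3)%nat) as [m ->] by (exists (k - 1)%nat; lia).
  clear Hk.
  destruct (le_lt_dec 10 m) as [Hb|Hs].
  - exists (3%nat, (2*m+2)%nat), (2%nat, 4%nat).
    split; [unfold pair_vertex; cbn; lia|]. split; [unfold pair_vertex; cbn; lia|].
    intros w Hw. apply big_case in Hw; auto.
    apply le_INR in Hw. rewrite plus_INR, mult_INR in Hw.
    rewrite plus_INR, mult_INR.
    replace (INR 2) with 2 in * by (simpl; lra). replace (INR 3) with 3 by (simpl; lra).
    nra.
  - exists (1%nat, 2%nat), (1%nat, 2%nat).
    split; [unfold pair_vertex; cbn; lia|]. split; [unfold pair_vertex; cbn; lia|].
    intros w _.
    assert (0 <= INR (length w)) by apply pos_INR.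
    assert (Hm1 : INR m <= 9) by (replace 9 with (INR 9) by (simpl; lra); apply le_INR; lia).
    assert (0 <= INR m) by apply pos_INR.
    rewrite plus_INR, mult_INR.
    replace (INR 2) with 2 by (simpl; lra). replace (INR 3) with 3 by (simpl; lra).
    nra.
Qed.

End MainM.
Import MainM.

Theorem theorem5 :
  exists g : nat -> R,
    Un_cv (fun n => (g n / (INR n ^ 2))%R) 0%R /\
    forall n : nat, 7 <= n -> Nat.odd n = true ->
      pair_diam_ge n (INR n ^ 2 / 4 + g n)%R.
Proof.
  exact theorem5_aux.
Qed.
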